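(* Let $G\ge 2$ and $p_t\in(0,1)$. Let $r_{t,1},\dots,r_{t,G}$ be i.i.d. $\mathrm{Bernoulli}(p_t)$, $R=\sum_j r_{t,j}$, $\hat p_t=R/G$, $\mathcal S=\{1\le R\le G-1\}$, and for a real constant $c$ let $\tilde p_t=c\,\hat p_t$. Let $\epsilon\in(0,|p_t-\hat p_t|)$. If \[ c\in\left(\frac{(p_t-\epsilon)\bigl(1-(1-p_t)^G-p_t^G\bigr)}{p_t(1-p_t^{G-1})},\ \frac{(p_t+\epsilon)\bigl(1-(1-p_t)^G-p_t^G\bigr)}{p_t(1-p_t^{G-1})}\right), \] then $\mathbb E[\tilde p_t\mid\mathcal S]\in(p_t-\epsilon,\ p_t+\epsilon)$.
   Context: Binary-reward group setting: $p_t$ is the expected reward, $\hat p_t$ the group baseline, $\tilde p_t$ the rescaled baseline, $\mathcal S$ the event that the group rewards are not all equal. *)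

(* Defs.v *)
From HB Require Import structures.
From mathcomp Require Import all_boot all_order all_algebra.
Set Implicit Arguments. Unset Strict Implicit. Unset Printing Implicit Defensive.
Import Order.TTheory GRing.Theory Num.Theory.
Local Open Scope ring_scope.

Definition bern_prob (R : realFieldType) (G : nat) (p : R)
  (w : {ffun 'I_G -> bool}) : R :=
  \prod_(i < G) (if w i then p else 1 - p).

Definition nsucc (G : nat) (w : {ffun 'I_G -> bool}) : nat :=
  (\sum_(i < G) (w i : nat))%N.

Definition phat (R : realFieldType) (G : nat) (w : {ffun 'I_G -> bool}) : R :=
  (nsucc w)%:R / G%:R.

Definition eventS (G : nat) (w : {ffun 'I_G -> bool}) : bool :=
  (1 <= nsucc w <= G - 1)%N.

Definition cond_exp (R : realFieldType) (G : nat) (p : R)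
  (E : pred {ffun 'I_G -> bool}) (X : {ffun 'I_G -> bool} -> R) : R :=
  (\sum_(w | E w) bern_prob p w * X w) / (\sum_(w | E w) bern_prob p w).

(* Main.v *)
Require Import Defs.
From HB Require Import structures.
From mathcomp Require Import all_boot all_order all_algebra.
From mathcomp Require Import zify ring lra.
Import Order.TTheory GRing.Theory Num.Theory.
Local Open Scope ring_scope.

Section H.
Variables (R : realFieldType) (G : nat) (p : R).

Lemma sum_prob : \sum_(w : {ffun 'I_G -> bool}) bern_prob p w = 1.
Proof.
rewrite /bern_prob -(bigA_distr_bigA (fun i (b : bool) => if b then p else 1 - p)) /=.
by apply: big1 => i _; rewrite big_bool /= addrC subrK.
Qed.

Lemma sum_i (i : 'I_G) :
  \sum_(w : {ffun 'I_G -> bool}) bern_prob p w * (w i : nat)%:R = p.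
Proof.
pose F' := fun (j : 'I_G) (b : bool) =>
  if j == i then (if b then p else 0) else (if b then p else 1 - p).
have E w : bern_prob p w * (w i : nat)%:R = \prod_j F' j (w j).
  rewrite /bern_prob (bigD1 i) //= [RHS](bigD1 i) //= /F' eqxx.
  rewrite [X in _ = _ * X](eq_bigr (fun j => if w j then p else 1 - p)); last first.
    by move=> j /negbTE ji; rewrite ji.
  by case: (w i); rewrite /= ?mulr1 ?mulr0 ?mul0r // mulrC.
rewrite (eq_bigr _ (fun w _ => E w)) -(bigA_distr_bigA F') /=.
rewrite (bigD1 i) //= [X in _ * X]big1 ?mulr1.
  by rewrite big_bool /F' eqxx /= addr0.
by move=> j /negbTE ji; rewrite big_bool /F' ji /= addrC subrK.
Qed.

Lemma sum_R : \sum_(w : {ffun 'I_G -> bool}) bern_prob p w * (nsucc w)%:R = G%:R * p.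
Proof.
rewrite (eq_bigr (fun w => \sum_i bern_prob p w * (w i : nat)%:R)); last first.
  by move=> w _; rewrite /nsucc natr_sum mulr_sumr.
rewrite exchange_big /= (eq_bigr (fun _ => p)); last by move=> i _; apply: sum_i.
by rewrite sumr_const card_ord mulr_natl.
Qed.

Definition w0 : {ffun 'I_G -> bool} := [ffun => false].
Definition w1 : {ffun 'I_G -> bool} := [ffun => true].

Lemma nsucc0 (w : {ffun 'I_G -> bool}) : (nsucc w == 0)%N = (w == w0).
Proof.
rewrite /nsucc sum_nat_eq0; apply/forallP/eqP => [H|->].
  apply/ffunP => i; rewrite ffunE; by move: (H i); case: (w i).
by move=> i; rewrite ffunE.
Qed.

Lemma nsuccG (w : {ffun 'I_G -> bool}) : ((\sum_(i < G) (~~ w i : nat)) == 0)%N = (w == w1).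
Proof.
rewrite sum_nat_eq0; apply/forallP/eqP => [H|->].
  apply/ffunP => i; rewrite ffunE; by move: (H i); case: (w i).
by move=> i; rewrite ffunE.
Qed.

Lemma nsucc_split (w : {ffun 'I_G -> bool}) : (nsucc w + \sum_(i < G) (~~ w i : nat))%N = G.
Proof.
rewrite /nsucc -big_split /= -[RHS]card_ord -sum1_card.
by apply: eq_bigr => i _; case: (w i).
Qed.

Lemma notS (w : {ffun 'I_G -> bool}) : (1 <= G)%N -> ~~ eventS w = (w == w0) || (w == w1).
Proof.
move=> G1; rewrite -nsucc0 -nsuccG /eventS.
have := nsucc_split w.
move: (nsucc w) (\sum_(i < G) (~~ w i : nat))%N => a b h.
apply/idP/idP; lia.
Qed.


Lemma sum_S (f : {ffun 'I_G -> bool} -> R) : (1 <= G)%N -> w0 != w1 ->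
  \sum_(w | eventS w) f w = \sum_w f w - f w0 - f w1.
Proof.
move=> G1 n01.
rewrite [X in _ = X - _ - _](bigID (@eventS G) predT) /=.
have -> : \sum_(i | predT i && ~~ eventS i) f i = f w0 + f w1.
  rewrite (eq_bigl (fun w => (w == w0) || (w == w1))); last by move=> w /=; rewrite notS.
  rewrite (bigD1 w0) ?eqxx //= (big_pred1 w1) //.
  move=> w /=; case: (eqVneq w w0) => [->|]; last by rewrite andbT.
  by rewrite (negbTE n01).
lra.
Qed.

End H.

Theorem lemma3 (R : realFieldType) (G : nat) (p c eps : R) :
  (2 <= G)%N -> 0 < p < 1 ->
  0 < eps ->
  eps < `|p - cond_exp p (@eventS G) (@phat R G)| ->
  (p - eps) * (1 - (1 - p) ^+ G - p ^+ G) / (p * (1 - p ^+ G.-1)) < c ->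
  c < (p + eps) * (1 - (1 - p) ^+ G - p ^+ G) / (p * (1 - p ^+ G.-1)) ->
  p - eps < cond_exp p (@eventS G) (fun w => c * phat R w) /\
  cond_exp p (@eventS G) (fun w => c * phat R w) < p + eps.
Proof.
move=> G2 /andP[p0 p1] e0 _ h1 h2.
have G1 : (1 <= G)%N by lia.
pose i0 : 'I_G := Ordinal G1.
have n01 : w0 G != w1 G.
  apply/eqP => /ffunP /(_ i0); by rewrite !ffunE.
have Pw0 : bern_prob p (w0 G) = (1 - p) ^+ G.
  rewrite /bern_prob (eq_bigr (fun _ => 1 - p)); last by move=> i _; rewrite ffunE.
  by rewrite prodr_const card_ord.
have Pw1 : bern_prob p (w1 G) = p ^+ G.
  rewrite /bern_prob (eq_bigr (fun _ => p)); last by move=> i _; rewrite ffunE.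
  by rewrite prodr_const card_ord.
have Gn0 : (G%:R : R) != 0 by rewrite pnatr_eq0; lia.
have ph0 : phat R (w0 G) = 0.
  by rewrite /phat (eqP (_ : nsucc (w0 G) == 0)%N) ?mul0r // nsucc0.
have ph1 : phat R (w1 G) = 1.
  have e : (\sum_(i < G) (~~ w1 G i : nat) == 0)%N by rewrite nsuccG.
  rewrite /phat; have := @nsucc_split G (w1 G); rewrite (eqP e) addn0 => ->.
  by rewrite divff.
have Ppos (w : {ffun 'I_G -> bool}) : 0 < bern_prob p w.
  apply: prodr_gt0 => i _; case: (w i) => //; lra.
have DE : \sum_(w : {ffun 'I_G -> bool} | eventS w) bern_prob p w = 1 - (1 - p) ^+ G - p ^+ G.
  by rewrite (@sum_S R G (bern_prob p)) // sum_prob Pw0 Pw1.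
have NE : \sum_(w : {ffun 'I_G -> bool} | eventS w) bern_prob p w * phat R w = p * (1 - p ^+ G.-1).
  rewrite (@sum_S R G (fun w => bern_prob p w * phat R w)) //= ph0 ph1 Pw1 mulr0 mulr1.
  rewrite (eq_bigr (fun w => bern_prob p w * (nsucc w)%:R / G%:R)); last first.
    by move=> w _; rewrite /phat mulrA.
  rewrite -mulr_suml sum_R mulrC mulrA mulVf // mul1r.
  by rewrite -{1}(prednK (_ : (0 < G)%N)) // exprS; ring.
pose wS : {ffun 'I_G -> bool} := [ffun i => i == i0].
have SwS : eventS wS.
  rewrite /eventS.
  have -> : nsucc wS = 1%N.
    rewrite /nsucc (bigD1 i0) //= big1 ?ffunE ?eqxx //.
    by move=> i /negbTE; rewrite ffunE => ->.
  apply/andP; split => //; lia.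
have Dpos : 0 < 1 - (1 - p) ^+ G - p ^+ G.
  rewrite -DE (bigD1 wS) //=.
  have := Ppos wS; have : 0 <= \sum_(i : {ffun 'I_G -> bool} | eventS i && (i != wS)) bern_prob p i.
    by apply: sumr_ge0 => w _; apply: ltW.
  lra.
have qpos : 0 < p * (1 - p ^+ G.-1).
  apply: mulr_gt0 => //; rewrite subr_gt0 exprn_ilt1 ?(ltW p0) //; lia.
have CE : cond_exp p (@eventS G) (fun w => c * phat R w) =
   c * (p * (1 - p ^+ G.-1)) / (1 - (1 - p) ^+ G - p ^+ G).
  rewrite /cond_exp DE -NE mulr_sumr; congr (_ / _).
  by apply: eq_bigr => w _; rewrite mulrCA.
rewrite CE ltr_pdivlMr // ltr_pdivrMr //.
move: h1 h2; rewrite ltr_pdivrMr // ltr_pdivlMr //.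
Qed.
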